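(* Let $\pi,\tau\in\mathfrak{S}_m$ be non-overlapping permutations. If $\pi$ and $\tau$ are c-Wilf equivalent, then $\pi$ and $\tau$ are super-strongly c-Wilf equivalent.
   Context: The standardization $\operatorname{st}(w)$ of a word of distinct integers replaces its smallest entry by 1, the next smallest by 2, etc. For $\pi\in\mathfrak{S}_m$ and $\sigma\in\mathfrak{S}_n$, $\operatorname{Em}(\pi,\sigma)=\{i\in[n-m+1]:\operatorname{st}(\sigma_i\cdots\sigma_{i+m-1})=\pi\}$. For a set $S$ of positive integers, $a^\pi_{n,S}$ is the number of $\sigma\in\mathfrak{S}_n$ with $\operatorname{Em}(\pi,\sigma)=S$. $\pi,\tau$ are c-Wilf equivalent if $a^\pi_{n,\emptyset}=a^\tau_{n,\emptyset}$ for all $n$, and super-strongly c-Wilf equivalent if $a^\pi_{n,S}=a^\tau_{n,S}$ for all $n,S$. The overlap set is $\mathcal{O}_\pi=\{i\in[m-1]:\operatorname{st}(\pi_{i+1}\cdots\pi_m)=\operatorname{st}(\pi_1\cdots\pi_{m-i})\}$; $\pi$ is non-overlapping if $\mathcal{O}_\pi=\{m-1\}$. *)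

(* Defs.v *)
From mathcomp Require Import all_boot all_fingroup.
Set Implicit Arguments. Unset Strict Implicit. Unset Printing Implicit Defensive.

(* One-line notation of a permutation s of {1..n}: the word s_1 ... s_n,
   with values in 1..n (internally 'I_n is {0..n-1}, so we add 1). *)
Definition word (n : nat) (s : 'S_n) : seq nat :=
  [seq (s i).+1 | i <- enum 'I_n].

Definition st (w : seq nat) : seq nat :=
  [seq (count (fun y => y < x) w).+1 | x <- w].

(* Factor sigma_i ... sigma_{i+m-1} (i is 1-indexed). *)
Definition factor (w : seq nat) (i m : nat) : seq nat := take m (drop i.-1 w).

(* Em(pi, sigma) = { i in [n-m+1] : st(sigma_i..sigma_{i+m-1}) = pi }, as a
   sorted list of 1-indexed positions. *)
Definition Em (m n : nat) (pi : 'S_m) (sigma : 'S_n) : seq nat :=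
  [seq i <- iota 1 (n - m + 1) | st (factor (word sigma) i m) == word pi].

(* a^pi_{n,S} = #{ sigma in S_n : Em(pi,sigma) = S } (equality as sets). *)
Definition a_count (m n : nat) (pi : 'S_m) (S : seq nat) : nat :=
  #|[set sigma : 'S_n | (all (fun i => i \in S) (Em pi sigma))
                        && (all (fun i => i \in Em pi sigma) S)]|.

Definition cWilf_equiv (m : nat) (pi tau : 'S_m) : Prop :=
  forall n : nat, a_count n pi [::] = a_count n tau [::].

Definition super_strong_cWilf_equiv (m : nat) (pi tau : 'S_m) : Prop :=
  forall (n : nat) (S : seq nat), a_count n pi S = a_count n tau S.

Definition overlap_set (m : nat) (pi : 'S_m) : seq nat :=
  [seq i <- iota 1 (m - 1) |
     st (drop i (word pi)) == st (take (m - i) (word pi))].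

Definition non_overlapping (m : nat) (pi : 'S_m) : Prop :=
  overlap_set pi = [:: m - 1].

(* Main.v *)
Require Import Defs.
From mathcomp Require Import all_boot all_fingroup.
From mathcomp Require Import all_algebra zify.
Set Implicit Arguments. Unset Strict Implicit. Unset Printing Implicit Defensive.

Definition rk (w : seq nat) (x : nat) := (count (fun y => y < x) w).+1.

Lemma stE w : st w = map (rk w) w.
Proof. by []. Qed.

Lemma st_map_mono (f : nat -> nat) w :
  {in w &, forall x y, (f x < f y) = (x < y)} -> st (map f w) = st w.
Proof.
move=> H; rewrite /st -map_comp; apply/eq_in_map => x xw /=.
congr S; rewrite count_map; apply: eq_in_count => y yw /=.
exact: H.
Qed.

Lemma count_lt_mono w x y : x \in w -> x < y ->
  count (fun z => z < x) w < count (fun z => z < y) w.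
Proof.
move=> xw lxy.
have -> : count (fun z => z < y) w =
   count (predU (fun z => z < x) (fun z => (x <= z) && (z < y))) w.
  by apply: eq_count => z /=; lia.
have h0 : count (predI (fun z => z < x) (fun z => (x <= z) && (z < y))) w = 0.
  by apply/eqP; rewrite -leqn0 leqNgt -has_count; apply/hasP => -[z _] /=; lia.
have := count_predUI (fun z => z < x) (fun z => (x <= z) && (z < y)) w.
rewrite h0 addn0 => ->.
rewrite -[X in X < _]addn0 ltn_add2l -has_count.
by apply/hasP; exists x => //=; rewrite leqnn.
Qed.

Lemma rk_mono w : {in w &, forall x y, (rk w x < rk w y) = (x < y)}.
Proof.
move=> x y xw yw; rewrite /rk ltnS.
case: (ltnP x y) => h; first exact: count_lt_mono.
apply/negbTE; rewrite -leqNgt; apply: sub_count => z /=; lia.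
Qed.

Lemma rk_inj w : {in w &, injective (rk w)}.
Proof.
move=> x y xw yw e; case: (ltngtP x y) => // h.
  by move: (rk_mono xw yw); rewrite e ltnn h.
by move: (rk_mono yw xw); rewrite e ltnn h.
Qed.

Lemma st_sub w u : {subset u <= w} -> st (map (rk w) u) = st u.
Proof.
move=> H; apply: st_map_mono => x y xu yu; apply: rk_mono; exact: H.
Qed.

Lemma st_drop d w : st (drop d (st w)) = st (drop d w).
Proof. by rewrite [st w]stE -map_drop st_sub // => x; apply: mem_drop. Qed.

Lemma st_take d w : st (take d (st w)) = st (take d w).
Proof. by rewrite [st w]stE -map_take st_sub // => x; apply: mem_take. Qed.

Lemma st_factor w i m : st (factor (st w) i m) = st (factor w i m).
Proof.
rewrite /factor [st w]stE -map_drop -map_take st_sub // => x /mem_take /mem_drop //.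
Qed.

Lemma size_st w : size (st w) = size w.
Proof. by rewrite size_map. Qed.

Lemma perm_iota u k : uniq u -> size u = k -> all (fun x => 0 < x <= k) u ->
  perm_eq u (iota 1 k).
Proof.
move=> Uu Su /allP Au; apply: uniq_perm => //; first exact: iota_uniq.
have [] := @uniq_min_size _ u (iota 1 k) Uu.
- by move=> x /Au; rewrite mem_iota; lia.
- by rewrite size_iota Su.
by [].
Qed.

Lemma st_perm u : uniq u -> perm_eq (st u) (iota 1 (size u)).
Proof.
move=> Uu; apply: perm_iota; first by rewrite stE map_inj_in_uniq //; exact: rk_inj.
  by rewrite size_st.
apply/allP => _ /mapP [x xu ->]; rewrite /rk /=.
rewrite -(count_predC (fun y => y < x) u) -[X in X < _]addn0 ltn_add2l -has_count.
by apply/hasP; exists x => //=; rewrite ltnn.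
Qed.

Lemma st_inj u u' : uniq u -> perm_eq u u' -> st u = st u' -> u = u'.
Proof.
move=> Uu Puu' E.
have Su : size u = size u' by apply: perm_size.
apply: (@eq_from_nth _ 0) => // i ilt.
have : nth 0 (st u) i = nth 0 (st u') i by rewrite E.
rewrite /st !(nth_map 0) -?Su // /rk.
rewrite -((seq.permP Puu') (fun y => y < nth 0 u' i)) => -[].
have Uu' : uniq u' by rewrite -(perm_uniq Puu').
have xi : nth 0 u i \in u by apply: mem_nth.
have yi : nth 0 u' i \in u by rewrite (perm_mem Puu'); apply: mem_nth; rewrite -Su.
move=> e; apply: (@rk_inj u) => //; by rewrite /rk e.
Qed.

Definition L n := permutations (iota 1 n).

Lemma memL n w : (w \in L n) = perm_eq w (iota 1 n).
Proof. by rewrite mem_permutations. Qed.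

Lemma L_uniq n w : w \in L n -> uniq w.
Proof. by rewrite memL => /perm_uniq ->; apply: iota_uniq. Qed.

Lemma L_size n w : w \in L n -> size w = n.
Proof. by rewrite memL => /perm_size ->; rewrite size_iota. Qed.

Lemma size_L n : size (L n) = n`!.
Proof. by rewrite /L size_permutations ?iota_uniq // size_iota. Qed.

Lemma LL_uniq n : uniq (L n).
Proof. exact: permutations_uniq. Qed.

Lemma st_take_L n p w : p <= n -> w \in L n -> st (take p w) \in L p.
Proof.
move=> pn wL; rewrite memL.
have := st_perm (take_uniq p (L_uniq wL)).
by rewrite size_takel // (L_size wL).
Qed.

Lemma st_drop_L n p w : w \in L n -> st (drop p w) \in L (n - p).
Proof.
move=> wL; rewrite memL.
have := st_perm (drop_uniq p (L_uniq wL)).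
by rewrite size_drop (L_size wL).
Qed.

Lemma count_sum (T : Type) (a : pred T) s : count a s = \sum_(x <- s) (a x : nat).
Proof. by elim: s => [|x s IH]; rewrite ?big_nil ?big_cons //= IH. Qed.

Lemma sum_pick (T : eqType) (s : seq T) x (g : T -> nat) : uniq s -> x \in s ->
  \sum_(y <- s) ((x == y) * g y) = g x.
Proof.
elim: s => [|z s IH] //= /andP [zs Us]; rewrite big_cons inE.
case: (eqVneq x z) => [-> _ | ne /= xs].
  rewrite mul1n big_seq big1 ?addn0 // => y ys.
  by case: (eqVneq z y) => [e|]; [rewrite e ys in zs | rewrite mul0n].
by rewrite mul0n IH.
Qed.

Lemma sum_eq_le (I : eqType) (r : seq I) (E1 E2 : I -> nat) :
  (forall i, i \in r -> E1 i <= E2 i) ->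
  \sum_(i <- r) E2 i <= \sum_(i <- r) E1 i -> forall i, i \in r -> E1 i = E2 i.
Proof.
elim: r => [|x r IH] // H; rewrite !big_cons => Hs i.
have h1 := H x (mem_head _ _).
have h2 : \sum_(j <- r) E1 j <= \sum_(j <- r) E2 j.
  by rewrite big_seq_cond [X in _ <= X]big_seq_cond; apply: leq_sum => j /andP [jr _];
     apply: H; rewrite inE jr orbT.
rewrite inE => /orP [/eqP -> | ir]; first by lia.
apply: IH => //; last by lia.
by move=> j jr; apply: H; rewrite inE jr orbT.
Qed.

Definition Fib n p x y :=
  count (fun w => (st (take p w) == x) && (st (drop p w) == y)) (L n).

Lemma decompA n p (R : seq nat -> seq nat -> nat) : p <= n ->
  \sum_(w <- L n) R (st (take p w)) (st (drop p w)) =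
  \sum_(x <- L p) \sum_(y <- L (n - p)) R x y * Fib n p x y.
Proof.
move=> pn.
transitivity (\sum_(x <- L p) \sum_(y <- L (n - p)) \sum_(w <- L n)
   ((st (take p w) == x) * ((st (drop p w) == y) * R x y))).
  symmetry; under eq_bigr do rewrite exchange_big.
  rewrite exchange_big /=; apply: eq_big_seq => w wL; symmetry.
  have -> : \sum_(x <- L p) \sum_(y <- L (n - p))
     ((st (take p w) == x) * ((st (drop p w) == y) * R x y)) =
     \sum_(x <- L p) ((st (take p w) == x) *
         \sum_(y <- L (n - p)) ((st (drop p w) == y) * R x y)).
    by apply: eq_bigr => x _; rewrite big_distrr.
  rewrite (sum_pick (fun x => \sum_(y <- L (n - p)) ((st (drop p w) == y) * R x y))) ?LL_uniq ?(st_take_L pn wL) //.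
  by rewrite (sum_pick (fun y => R _ y)) ?LL_uniq ?st_drop_L.
apply: eq_bigr => x _; apply: eq_bigr => y _.
rewrite /Fib count_sum big_distrr /=; apply: eq_bigr => w _.
by case: (st (take p w) == x); case: (st (drop p w) == y); rewrite /= ?muln0 ?mul0n ?muln1 ?mul1n.
Qed.

Definition gset n p (w : seq nat) : {set 'I_n} := [set i : 'I_n | i.+1 \in take p w].

Lemma card_gset n p w : p <= n -> w \in L n -> #|gset n p w| = p.
Proof.
move=> pn wL.
rewrite /gset cardsE cardE /enum_mem size_filter.
rewrite -(count_map (fun i : 'I_n => (nat_of_ord i).+1) (mem (take p w))).
have -> : [seq (nat_of_ord i).+1 | i <- Finite.enum 'I_n] = iota 1 n.
  have := val_enum_ord n; rewrite enumT => e.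
  by rewrite (map_comp S val) e -(iotaDl 1 0).
rewrite -((seq.permP (_ : perm_eq w (iota 1 n))) (mem (take p w))); last by rewrite -memL.
have -> : count (mem (take p w)) w = count (mem (take p w)) (take p w ++ drop p w) by rewrite cat_take_drop.
rewrite count_cat.
have := L_uniq wL; rewrite -{1}(cat_take_drop p w) cat_uniq => /and3P [_ hd _].
have -> : count (mem (take p w)) (drop p w) = 0.
  by apply/eqP; rewrite -leqn0 leqNgt -has_count; apply: contra hd => /hasP [z z1 z2]; apply/hasP; exists z.
rewrite addn0.
have /eqP -> : count (mem (take p w)) (take p w) == size (take p w) by rewrite -all_count; apply/allP.
by rewrite size_takel // (L_size wL).
Qed.

Lemma gset_sub n p w1 w2 : w1 \in L n -> gset n p w1 = gset n p w2 ->
  {subset take p w1 <= take p w2}.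
Proof.
move=> w1L e v vu.
have : v \in iota 1 n by rewrite -(perm_mem (_ : perm_eq w1 (iota 1 n))) ?(mem_take vu) // -memL.
rewrite mem_iota => /andP [v1 v2].
have vlt : v.-1 < n by lia.
have : Ordinal vlt \in gset n p w1 by rewrite inE /= prednK.
by rewrite e inE /= prednK.
Qed.

Lemma fib_le n p x y : p <= n -> Fib n p x y <= 'C(n, p).
Proof.
move=> pn; rewrite /Fib -size_filter.
set fib := filter _ (L n).
have Ufib : uniq fib := filter_uniq _ (LL_uniq n).
have inj : {in fib &, injective (gset n p)}.
  move=> w1 w2; rewrite !mem_filter => /andP [/andP [/eqP e1 /eqP f1] w1L] /andP [/andP [/eqP e2 /eqP f2] w2L] e.
  have Eu : take p w1 =i take p w2.
    by move=> v; apply/idP/idP; [apply: (gset_sub w1L e) | apply: (gset_sub w2L (esym e))].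
  have U1 := L_uniq w1L; have U2 := L_uniq w2L.
  have Pu : perm_eq (take p w1) (take p w2) by apply: uniq_perm; rewrite ?take_uniq.
  have Tu : take p w1 = take p w2 by apply: st_inj; rewrite ?take_uniq // e1 e2.
  have Pd : perm_eq (drop p w1) (drop p w2).
    rewrite -(perm_cat2l (take p w1)) {2}Tu !cat_take_drop.
    by apply: perm_trans (_ : perm_eq _ (iota 1 n)) _; rewrite -?memL // perm_sym -memL.
  have Td : drop p w1 = drop p w2 by apply: st_inj; rewrite ?drop_uniq // f1 f2.
  by rewrite -(cat_take_drop p w1) Tu Td cat_take_drop.
rewrite -(size_map (gset n p)) -[in X in _ <= X](card_ord n) -card_draws cardE.
apply: uniq_leq_size; first by rewrite map_inj_in_uniq.
move=> _ /mapP [w wf ->]; rewrite mem_enum inE card_gset //.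
by move: wf; rewrite mem_filter => /andP [].
Qed.

Lemma iter_addn k a : iter k (addn a) 0 = k * a.
Proof. by elim: k => //= k ->; rewrite mulSn. Qed.

Lemma fib_eq n p x y : p <= n -> x \in L p -> y \in L (n - p) -> Fib n p x y = 'C(n, p).
Proof.
move=> pn xL yL.
have tot := decompA (fun _ _ => 1) pn.
rewrite /= big_const_seq count_predT size_L iter_addn muln1 in tot.
have H1 : forall x, x \in L p -> \sum_(y <- L (n - p)) Fib n p x y = \sum_(y <- L (n - p)) 'C(n, p).
  apply: sum_eq_le.
    by move=> x' _; rewrite big_seq_cond [X in _ <= X]big_seq_cond; apply: leq_sum => y' /andP [y'L _]; apply: fib_le.
  have -> : \sum_(i <- L p) \sum_(y0 <- L (n - p)) Fib n p i y0 = n`!.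
    by rewrite tot; apply: eq_bigr => ? _; apply: eq_bigr => ? _; rewrite mul1n.

  under eq_bigr do rewrite big_const_seq count_predT size_L iter_addn.

  rewrite big_const_seq count_predT size_L iter_addn -(bin_fact pn).
  by apply: eq_leq; rewrite [RHS]mulnC mulnA.
apply: (@sum_eq_le _ (L (n - p)) (Fib n p x) (fun _ => 'C(n, p))) => //.
  by move=> y' _; apply: fib_le.
by rewrite (H1 x xL).
Qed.

Lemma cut_count n p (P Q : pred (seq nat)) : p <= n ->
  count (fun w => P (st (take p w)) && Q (st (drop p w))) (L n) =
  'C(n, p) * count P (L p) * count Q (L (n - p)).
Proof.
move=> pn; rewrite count_sum (decompA (fun x y => (P x && Q y : nat)) pn).
transitivity (\sum_(x <- L p) \sum_(y <- L (n - p)) ('C(n, p) * P x) * Q y).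
  apply: eq_big_seq => x xL; apply: eq_big_seq => y yL.
  by rewrite fib_eq //; case: (P x); case: (Q y); rewrite /= ?muln0 ?mul0n ?muln1 ?mul1n.
rewrite !count_sum big_distrr /= exchange_big /=; apply: eq_bigr => y _.
by rewrite big_distrr /= big_distrl.
Qed.

Definition occ m (pw w : seq nat) i := st (factor w i m) == pw.
Definition bW m pw n T := count (fun w => all (occ m pw w) T) (L n).

Lemma occ_st m pw u i : occ m pw (st u) i = occ m pw u i.
Proof. by rewrite /occ st_factor. Qed.

Lemma occ_take m pw w p i : 0 < i -> i + m - 1 <= p ->
  occ m pw w i = occ m pw (take p w) i.
Proof.
move=> i0 h; rewrite /occ /factor !take_drop take_takel //; lia.
Qed.

Lemma occ_drop m pw w p i : p < i -> occ m pw w i = occ m pw (drop p w) (i - p).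
Proof.
move=> h; rewrite /occ /factor drop_drop; congr (st (take _ (drop _ _)) == _); lia.
Qed.

Lemma b_cut m pw n p T : 0 < m -> p <= n -> all (fun i => 0 < i) T ->
  all (fun i => (i + m - 1 <= p) || (p < i)) T ->
  bW m pw n T = 'C(n, p) * bW m pw p [seq i <- T | i + m - 1 <= p]
                         * bW m pw (n - p) [seq i - p | i <- T & p < i].
Proof.
move=> m0 pn TP TC; rewrite /bW -cut_count //; apply: eq_count => w.
elim: T TP TC => [|i T IH] //= /andP [i0 H0] /andP [hi H].
rewrite IH //.
case: (leqP (i + m - 1) p) => h1.
  have -> : (p < i) = false by apply/negbTE; lia.
  by rewrite /= occ_st -(occ_take _ _ i0 h1) andbA.
have h2 : p < i by move: hi; rewrite leqNgt h1.
rewrite h2 /= (occ_drop _ _ _ h2) -(occ_st _ _ (drop p w)).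
by rewrite andbCA.
Qed.

Definition NO m pw := forall d, 0 < d -> d < m - 1 -> st (drop d pw) != st (take (m - d) pw).

Lemma drop_take_c d m (s : seq nat) : d <= m -> drop d (take m s) = take (m - d) (drop d s).
Proof. by move=> h; rewrite take_drop subnK. Qed.

Lemma occ_bad m pw w i j : NO m pw -> 0 < i -> i < j -> j < i + m - 1 ->
  ~~ (occ m pw w i && occ m pw w j).
Proof.
move=> no i0 ij jm; apply/negP => /andP [/eqP ex /eqP ey].
have d0 : 0 < j - i by lia.
have dm : j - i < m - 1 by lia.
apply: (negP (no _ d0 dm)); apply/eqP.
rewrite -{1}ex -ey st_drop st_take /factor.
rewrite drop_take_c; last by lia.
rewrite drop_drop take_takel; last by lia.
by congr (st (take _ (drop _ _))); lia.
Qed.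

Lemma occ_long m pw w i : 0 < m -> size pw = m -> size w < i + m - 1 -> 0 < i -> ~~ occ m pw w i.
Proof.
move=> m0 sp h i0; rewrite /occ; apply/eqP => e.
have := congr1 size e; rewrite size_st sp /factor size_take size_drop.
case: ifP => c; lia.
Qed.

Definition fits m n (T : seq nat) := all (fun i => (0 < i) && (i + m - 1 <= n)) T.
Definition covers m (T : seq nat) p := has (fun i => (i <= p) && (p < i + m - 1)) T.
Definition uncut m n T := all (covers m T) (iota 1 n.-1).
Definition good m (T : seq nat) := all (fun i => all (fun j => (i < j) ==> (i + m - 1 <= j)) T) T.

Lemma uniq_dir m n T T' x : 1 < m -> fits m n T -> uncut m n T' -> good m T ->
  (forall y, y < x -> (y \in T) = (y \in T')) -> x \in T -> x \in T'.
Proof.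
move=> m1 /allP F /allP U /allP G IH xT.
have /andP [x0 xn] := F x xT.
have : x \in iota 1 n.-1 by rewrite mem_iota; lia.
move/U => /hasP [j jT' /andP [jx xj]].
case: (ltngtP j x) => [jltx | xltj | e]; [ | lia | by rewrite -e].
have jT : j \in T by rewrite IH.
by have := G j jT => /allP /(_ x xT); rewrite jltx /=; lia.
Qed.

Lemma uniqT m n T T' : 1 < m -> fits m n T -> fits m n T' -> uncut m n T -> uncut m n T' ->
  good m T -> good m T' -> T =i T'.
Proof.
move=> m1 F F' U U' G G' x; elim/ltn_ind: x => x IH.
apply/idP/idP; first exact: (uniq_dir m1 F U' G IH).
by apply: (uniq_dir m1 F' U G') => y /IH ->.
Qed.

Lemma bW_zero m pw n T : (forall w, w \in L n -> ~~ all (occ m pw w) T) -> bW m pw n T = 0.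
Proof.
move=> H; apply/eqP; rewrite -leqn0 leqNgt -has_count; apply/hasP => -[w wL].
by apply/negP; exact: H.
Qed.

Lemma easy m pw1 pw2 n : 1 < m -> size pw1 = m -> size pw2 = m -> NO m pw1 -> NO m pw2 ->
  (forall n', n' < n -> forall T, all (fun i => 0 < i) T -> bW m pw1 n' T = bW m pw2 n' T) ->
  forall T, all (fun i => 0 < i) T -> ~~ [&& fits m n T, uncut m n T & good m T] ->
  bW m pw1 n T = bW m pw2 n T.
Proof.
move=> m1 S1 S2 N1 N2 IH T TP.
case: (boolP (fits m n T)) => [F | /allPn [i iT]] /=; last first.
  have i0 : 0 < i by move/allP: TP => /(_ i iT).
  rewrite i0 /= -ltnNge => ni _.
  suff H : forall pw, size pw = m -> bW m pw n T = 0 by rewrite !H.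
  move=> pw Sp; apply: bW_zero => w wL; apply/negP => /allP /(_ i iT).
  by apply/negP; apply: occ_long => //; [lia | rewrite (L_size wL)].
case: (boolP (uncut m n T)) => [U | /allPn [p pI]] /=; last first.
  move=> /hasPn nc _; move: pI; rewrite mem_iota => /andP [p1 p2].
  have pn : p <= n by lia.
  have TC : all (fun i => (i + m - 1 <= p) || (p < i)) T.
    by apply/allP => i iT; have := nc i iT; rewrite /=; lia.
  rewrite (b_cut _ _ _ TP TC) ?(b_cut _ _ _ TP TC) //; try lia.
  rewrite !IH //; try lia.
  - by rewrite all_map; apply/allP => i; rewrite mem_filter /=; lia.
  - by rewrite all_filter; apply/allP => i iT; apply/implyP => _; move/allP: TP; apply.
case: (boolP (good m T)) => [// | /allPn [i iT /allPn [j jT nij]]] _.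
move: nij; rewrite negb_imply -ltnNge => /andP [ij ji].
suff H : forall pw, NO m pw -> bW m pw n T = 0 by rewrite !H.
move=> pw N; apply: bW_zero => w wL; apply/negP => /allP A.
have i0 : 0 < i by move/allP: TP => /(_ i iT).
by apply: (negP (occ_bad w N i0 ij _)); [lia | rewrite !A].
Qed.

Section IESec.
Import GRing.Theory.
Local Open Scope ring_scope.

Lemma IE0 (T : finType) (E : {set T}) :
  ((E == set0) %:R : int) = \sum_(A : {set T}) ((A \subset E)%:R * (-1) ^+ #|A|).
Proof.
have := @bigA_distr int 0 1 *%R +%R T (fun i => if i \in E then -1 else 0) (fun _ => 1).
move=> H.
transitivity (\prod_i ((if i \in E then -1 else 0) + 1) : int).
  case: (set_0Vmem E) => [-> | [x xE]].
    by rewrite eqxx big1 // => i _; rewrite inE add0r.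
  have -> : (E == set0) = false by apply/negbTE/set0Pn; exists x.
  by rewrite (bigD1 x) //= xE addNr mul0r.
rewrite H; apply: eq_bigr => A _.
case: (boolP (A \subset E)) => [AE | /subsetPn [x xA xE]].
  rewrite mul1r -big_mkcond /= -prodr_const; apply: eq_bigr => i iA.
  by rewrite (subsetP AE i iA).
rewrite mul0r (bigD1 x) //= xA (negbTE xE) mul0r //.
Qed.

End IESec.

Section GSec.
Import GRing.Theory.

Definition seqA k (A : {set 'I_k}) : seq nat := [seq (val i).+1 | i <- enum A].
Definition EW m pw k w : {set 'I_k} := [set i : 'I_k | occ m pw w (val i).+1].
Definition aE m pw n := count (fun w => EW m pw (n - m + 1) w == set0) (L n).

Lemma all_seqA m pw k (A : {set 'I_k}) w : all (occ m pw w) (seqA A) = (A \subset EW m pw k w).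
Proof.
rewrite all_map; apply/allP/subsetP => H i.
  by move=> iA; rewrite inE; apply: (H i); rewrite mem_enum.
by rewrite mem_enum => /H; rewrite inE.
Qed.

Lemma mem_seqA k (A : {set 'I_k}) (i : 'I_k) : ((val i).+1 \in seqA A) = (i \in A).
Proof.
rewrite /seqA (mem_map (f := fun i : 'I_k => (val i).+1)) ?mem_enum //.
by move=> a b [] /val_inj.
Qed.

Lemma IE_a m pw n :
  ((aE m pw n)%:R : int) = (\sum_(A : {set 'I_(n - m + 1)})
       (-1) ^+ #|A| * (bW m pw n (seqA A))%:R)%R.
Proof.
rewrite /aE count_sum natr_sum.
under eq_bigr do rewrite IE0.
rewrite exchange_big /=; apply: eq_bigr => A _.
rewrite /bW count_sum natr_sum big_distrr /=; apply: eq_bigr => w _.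
by rewrite all_seqA mulrC.
Qed.

Lemma mainW m pw1 pw2 : (1 < m)%N -> size pw1 = m -> size pw2 = m -> NO m pw1 -> NO m pw2 ->
  (forall n, aE m pw1 n = aE m pw2 n) ->
  forall n T, all (fun i => 0 < i)%N T -> bW m pw1 n T = bW m pw2 n T.
Proof.
move=> m1 S1 S2 N1 N2 W n; elim/ltn_ind: n => n IH T TP.
case: (boolP [&& fits m n T, uncut m n T & good m T]) => [/and3P [F U G] | H]; last exact: easy.
pose k := (n - m + 1)%N.
pose AT : {set 'I_k} := [set i : 'I_k | (val i).+1 \in T].
have seqAT : seqA AT =i T.
  move=> v; apply/mapP/idP => [[i] | vT].
    by rewrite mem_enum inE => iT ->.
  have /andP [v0 vn] := allP F v vT.
  have vk : (v.-1 < k)%N by rewrite /k; lia.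
  exists (Ordinal vk); first by rewrite mem_enum inE /= prednK.
  by rewrite /= prednK.
have Oth : forall A : {set 'I_k}, A != AT -> bW m pw1 n (seqA A) = bW m pw2 n (seqA A).
  move=> A nA; apply: easy => //.
    by rewrite all_map; apply/allP.
  apply/negP => /and3P [F' U' G']; have E := uniqT m1 F' F U' U G' G.
  apply: (negP nA); apply/eqP/setP => i; by rewrite inE -E mem_seqA.
have key : ((bW m pw1 n (seqA AT))%:R : int)%R = ((bW m pw2 n (seqA AT))%:R)%R.
  have e1 := IE_a m pw1 n; have e2 := IE_a m pw2 n.
  rewrite W e2 (bigD1 AT) // [in RHS](bigD1 AT) //= in e1.
  have : (\sum_(i : {set 'I_k} | i != AT) ((-1) ^+ #|i| * ((bW m pw1 n (seqA i))%:R : int)) =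
         \sum_(i : {set 'I_k} | i != AT) ((-1) ^+ #|i| * (bW m pw2 n (seqA i))%:R))%R.
    by apply: eq_bigr => A nA; rewrite Oth.
  move=> es; rewrite es in e1; move/addIr: e1.
  by move/(can_inj (signrMK _)) ->.
have : bW m pw1 n (seqA AT) = bW m pw2 n (seqA AT).
  by move: key; rewrite !natz => -[].
by rewrite /bW !(eq_count (fun w => eq_all_r seqAT (occ _ _ w))).
Qed.

End GSec.

Definition aS m pw n (A : {set 'I_(n - m + 1)}) := count (fun w => EW m pw (n - m + 1) w == A) (L n).
Arguments aS : clear implicits.

Lemma bS_sum m pw n (A : {set 'I_(n - m + 1)}) :
  bW m pw n (seqA A) = \sum_(B : {set 'I_(n - m + 1)} | A \subset B) aS m pw n B.
Proof.
rewrite /bW (eq_count (fun w => all_seqA m pw A w)) count_sum.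
rewrite /aS (eq_bigr (fun B => \sum_(w <- L n) (EW m pw (n - m + 1) w == B : nat))); last by move=> B _; rewrite count_sum.
rewrite exchange_big /=; apply: eq_bigr => w _.
case: (boolP (A \subset EW m pw (n - m + 1) w)) => h /=.
  rewrite (bigD1 (EW m pw (n - m + 1) w)) //= eqxx big1 // => B /andP [_ nB].
  by rewrite eq_sym (negbTE nB).
rewrite big1 // => B AB; case: (eqVneq (EW m pw (n - m + 1) w) B) => // e.
by rewrite e AB in h.
Qed.

Lemma aS_eq m pw1 pw2 n : (forall T, all (fun i => 0 < i) T -> bW m pw1 n T = bW m pw2 n T) ->
  forall A, aS m pw1 n A = aS m pw2 n A.
Proof.
move=> Hb.
suff H : forall d (A : {set 'I_(n - m + 1)}), n - m + 1 - #|A| = d -> aS m pw1 n A = aS m pw2 n A.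
  by move=> A; apply: (H _ A erefl).
elim/ltn_ind => d IH A dA.
have e1 := bS_sum pw1 A; have e2 := bS_sum pw2 A.
rewrite Hb in e1; last by rewrite all_map; apply/allP.
rewrite (bigD1 A) //= in e1; rewrite (bigD1 A) //= in e2.
have : \sum_(i : {set 'I_(n - m + 1)} | (A \subset i) && (i != A)) aS m pw1 n i =
       \sum_(i : {set 'I_(n - m + 1)} | (A \subset i) && (i != A)) aS m pw2 n i.
  apply: eq_bigr => B /andP [AB nB].
  have pr : A \proper B by rewrite properEneq eq_sym nB AB.
  have c1 := proper_card pr.
  have c2 : #|B| <= n - m + 1 by rewrite -[X in _ <= X](card_ord (n - m + 1)); apply: max_card.
  by apply: (IH (n - m + 1 - #|B|)) => //; lia.
move=> es; rewrite es in e1; by move/addIn: (etrans (esym e1) e2).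
Qed.


Lemma word_inL n (s : 'S_n) : word s \in L n.
Proof.
rewrite memL; apply: perm_iota.
- rewrite map_inj_uniq ?enum_uniq // => i j [] /val_inj; exact: perm_inj.
- by rewrite size_map size_enum_ord.
- by apply/allP => _ /mapP [i _ ->]; rewrite /= ltn_ord.
Qed.

Lemma word_inj n : injective (@word n).
Proof.
move=> s t e; apply/permP => i; apply: val_inj.
have := (eq_in_map _ _ _).2 e i; rewrite mem_enum => /(_ isT) [].
done.
Qed.

Lemma card_word n (Cd : pred (seq nat)) : #|[set s : 'S_n | Cd (word s)]| = count Cd (L n).
Proof.
have U : uniq (enum 'S_n) := enum_uniq _.
have Sz : size (enum 'S_n) = n`! by rewrite -cardT card_Sn.
rewrite enumT in U Sz.
rewrite cardsE cardE /enum_mem size_filter -(count_map (@word n) Cd).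
apply/seq.permP; apply: uniq_perm.
- by rewrite (map_inj_uniq (@word_inj n)).
- exact: LL_uniq.
have [] := @uniq_min_size _ (map (@word n) (Finite.enum 'S_n)) (L n).
- by rewrite (map_inj_uniq (@word_inj n)).
- by move=> _ /mapP [s _ ->]; apply: word_inL.
- by rewrite size_map size_L Sz.
by [].
Qed.

Lemma cond_eq m pw k (S : seq nat) w : all (fun s => s \in iota 1 k) S ->
  (all (fun i => i \in S) (filter (occ m pw w) (iota 1 k)) &&
   all (fun i => i \in filter (occ m pw w) (iota 1 k)) S) =
  (EW m pw k w == [set i : 'I_k | (val i).+1 \in S]).
Proof.
move=> /allP hS; apply/andP/eqP => [[/allP H1 /allP H2] | E].
  apply/setP => i; rewrite !inE; apply/idP/idP => h.
    by apply: H1; rewrite mem_filter h mem_iota /=; have := ltn_ord i; lia.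
  by have := H2 _ h; rewrite mem_filter => /andP [].
split; apply/allP => x.
  rewrite mem_filter mem_iota => /andP [ox /andP [x1 x2]].
  have xk : x.-1 < k by lia.
  have : Ordinal xk \in EW m pw k w by rewrite inE /= prednK.
  by rewrite E inE /= prednK.
move=> xS; have := hS x xS; rewrite mem_iota => /andP [x1 x2].
have xk : x.-1 < k by lia.
have : Ordinal xk \in [set i : 'I_k | (val i).+1 \in S] by rewrite inE /= prednK.
rewrite -E inE /= prednK // => ox.
by rewrite mem_filter ox mem_iota x1 x2.
Qed.

Lemma cond_out m pw k (S : seq nat) w : ~~ all (fun s => s \in iota 1 k) S ->
  (all (fun i => i \in S) (filter (occ m pw w) (iota 1 k)) &&
   all (fun i => i \in filter (occ m pw w) (iota 1 k)) S) = false.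
Proof.
move=> /allPn [s sS sk]; apply/negbTE; rewrite negb_and; apply/orP; right.
by apply/allPn; exists s => //; rewrite mem_filter negb_and sk orbT.
Qed.

Theorem theorem5p4 (m : nat) (pi tau : 'S_m) :
  non_overlapping pi -> non_overlapping tau ->
  cWilf_equiv pi tau -> super_strong_cWilf_equiv pi tau.
Proof.
move=> no1 no2 cw n S.
have m1 : 1 < m.
  have : (m - 1) \in overlap_set pi by rewrite no1 mem_head.
  by rewrite mem_filter mem_iota => /andP [_ h]; lia.
have Sz : forall s : 'S_m, size (word s) = m by move=> s; rewrite size_map size_enum_ord.
have NOw : forall s : 'S_m, non_overlapping s -> NO m (word s).
  move=> s nos d d0 dm; apply/eqP => e.
  have : d \in overlap_set s by rewrite mem_filter e eqxx mem_iota /=; lia.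
  by rewrite nos inE => /eqP; lia.
have acE : forall (s : 'S_m) n S, a_count n s S =
   count (fun w => all (fun i => i \in S) (filter (occ m (word s) w) (iota 1 (n - m + 1))) &&
     all (fun i => i \in filter (occ m (word s) w) (iota 1 (n - m + 1))) S) (L n).
  by move=> s n' S'; rewrite /a_count -card_word.
have aEq : forall n, aE m (word pi) n = aE m (word tau) n.
  move=> n'; have := cw n'; rewrite !acE.
  have e0 : [set i : 'I_(n' - m + 1) | (val i).+1 \in [::]] = set0.
    by apply/setP => i; rewrite !inE.
  rewrite !(eq_count (fun w => @cond_eq m _ _ [::] w isT)) e0.
  done.
have bEq := mainW m1 (Sz pi) (Sz tau) (NOw _ no1) (NOw _ no2) aEq.
rewrite !acE.
case: (boolP (all (fun s => s \in iota 1 (n - m + 1)) S)) => hS.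
  rewrite !(eq_count (fun w => @cond_eq m _ _ _ w hS)).
  exact: (aS_eq (bEq n)).
by rewrite !(eq_count (fun w => @cond_out m _ _ _ w hS)).
Qed.
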